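(* Let $G$ be a connected, unweighted, undirected plane graph on $n$ vertices, and let $C=(v_1,v_2,\ldots,v_{|C|})$ be the cyclic walk of a face of $G$, partitioned into two parts $C_1=(v_1,\ldots,v_\ell)$ and $C_2=(v_{\ell+1},\ldots,v_{|C|})$. Then for any subset $C_2'$ of $C_2$, all distances in $G$ between vertices of $C_1$ and vertices of $C_2'$ can be encoded in $\tilde{O}(|C_1|+|C_2'|)$ bits; that is, there is a bit string of that length from which $d_G(v_i,v_p)$ can be recovered for every $v_i\in C_1$ and $v_p\in C_2'$ (given the positions $i$ and $p$).
   Context: $d_G$ denotes shortest-path (hop) distance in $G$. $\tilde{O}(\cdot)$ hides factors polylogarithmic in $n$. A plane graph is a planar graph with a fixed embedding; the cyclic walk of a face is the closed walk along its boundary. *)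

(* Defs.v *)
(* Plane graphs are represented by combinatorial maps
   (rotation systems) of genus 0. *)
From mathcomp Require Import all_boot fingroup perm.
Set Implicit Arguments. Unset Strict Implicit. Unset Printing Implicit Defensive.

Section PlaneGraph.
Variables (V D : finType) (tl : D -> V) (alpha sigma : {perm D}).

(* Darts: D, dart d leaves vertex [tl d]; [alpha] pairs the two
   darts of an edge; [sigma] is the rotation (cyclic order of darts) around
   each vertex.  The face permutation maps d to the next dart of its face. *)
Definition phi (d : D) : D := sigma (alpha d).

Definition head (d : D) : V := tl (alpha d).

Definition is_rotation_system : Prop :=
  [/\ forall d, alpha (alpha d) = d,
      forall d, alpha d != d,
      forall d, tl (sigma d) = tl d &
      forall d d', tl d = tl d' -> fconnect sigma d d'].

Definition simple_map : Prop :=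
  (forall d, tl d != head d) /\
  (forall d d', tl d = tl d' -> head d = head d' -> d = d').

Definition adj : rel V := fun u v => [exists d, (tl d == u) && (head d == v)].

Definition connected_graph : Prop := forall u v : V, connect adj u v.

Definition n_edges : nat := #|D| %/ 2.
Definition n_faces : nat := fcard phi D.

(* genus 0 (Euler's formula); an edgeless connected graph (one vertex) is
   trivially plane *)
Definition planar_map : Prop :=
  #|D| = 0 \/ #|V| + n_faces = n_edges + 2.

Definition plane_graph : Prop :=
  [/\ is_rotation_system, simple_map, connected_graph & planar_map].

(* hop distance d_G: least k such that v is within k steps of u
   (returns #|V| if v is unreachable, which never happens for connected G) *)
Definition ball (k : nat) (u : V) : {set V} :=
  iter k (fun S => S :|: [set y | [exists x in S, adj x y]]) [set u].

Definition dist (u v : V) : nat :=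
  find (fun k => v \in ball k u) (iota 0 #|V|).

(* the cyclic walk of the face containing dart d: v_1, ..., v_|C|,
   here 0-indexed: face_vertex d j = v_(j+1) for j < face_length d *)
Definition face_length (d : D) : nat := fingraph.order phi d.
Definition face_vertex (d : D) (j : nat) : V := tl (iter j phi d).

End PlaneGraph.

(* Main.v *)
Require Import Defs.
From mathcomp Require Import all_boot fingroup perm zify.
Set Implicit Arguments. Unset Strict Implicit. Unset Printing Implicit Defensive.

Section Cyc.
Variable D : finType.
Implicit Types p q e n : {perm D}.

Definition ncyc p := #|porbits p|.

Lemma ncyc_mult p x y :
  ncyc (p * tperm x y)%g + (x \notin porbit p y).*2 = ncyc p + (x != y).
Proof.
rewrite /ncyc -porbitsV invMg tpermV -(porbitsV p) -porbitV.
exact: porbits_mul_tperm.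
Qed.

Lemma porbit_fconnect p x y : (y \in porbit p x) = fconnect p x y.
Proof.
apply/porbitP/idP => [[i ->]|]; first by rewrite permX fconnect_iter.
move/iter_findex => <-; exists (findex p x y); by rewrite permX.
Qed.

Definition rel2 e n : rel D := fun u w => (w == e u) || (w == n u).

Lemma fconnect_sub_conn (r : rel D) p :
  (forall u, r u (p u)) -> forall u w, fconnect p u w -> connect r u w.
Proof.
move=> H; apply: connect_sub => u w /eqP <-; exact/connect1.
Qed.

Lemma rel2_sym e n : connect_sym (rel2 e n).
Proof.
have step u w : rel2 e n u w -> connect (rel2 e n) w u.
  case/orP=> /eqP ->.
    apply: (fconnect_sub_conn (p := e)) => [v|]; first by rewrite /rel2 eqxx.
    by rewrite fconnect_sym ?fconnect1 //; exact: perm_inj.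
  apply: (fconnect_sub_conn (p := n)) => [v|]; first by rewrite /rel2 eqxx orbT.
  by rewrite fconnect_sym ?fconnect1 //; exact: perm_inj.
suff H u w : connect (rel2 e n) u w -> connect (rel2 e n) w u.
  by move=> u w; apply/idP/idP; apply: H.
case/connectP => p; elim: p u => [|v p IH] u /=; first by move=> _ ->.
case/andP=> ruv pv Hw; apply: connect_trans (IH _ pv Hw) (step _ _ ruv).
Qed.

Definition cls (r : rel D) u := [set w | connect r u w].
Definition ncls (r : rel D) := #|[set cls r u | u : D]|.
Definition ncomp e n := ncls (rel2 e n).

Lemma card_imset_le (T T' : finType) (A : {set D}) (f : D -> T) (g : D -> T') :
  {in A &, forall u v, g u = g v -> f u = f v} -> #|f @: A| <= #|g @: A|.
Proof.
move=> H; case: (set_0Vmem A) => [->|[x0 _]]; first by rewrite imset0 cards0.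
pose h (C : T') := oapp f (f x0) [pick u in A | g u == C].
have -> : f @: A = h @: (g @: A).
  apply/setP => C; apply/imsetP/imsetP => [[u uA ->]|[C' /imsetP[u uA ->] ->]].
    exists (g u); first exact: imset_f.
    rewrite /h; case: pickP => [u' /andP[u'A /eqP gu]|/(_ u)]; last by rewrite uA eqxx.
    by rewrite /= (H u' u).
  rewrite /h; case: pickP => [u' /andP[u'A /eqP gu]|/(_ u)]; last by rewrite uA eqxx.
  by exists u'.
exact: leq_imset_card.
Qed.

Lemma cls_eq (r : rel D) u w : connect_sym r -> connect r u w -> cls r u = cls r w.
Proof. by move=> sym H; apply/setP => v; rewrite !inE (same_connect sym H). Qed.

Lemma ncls_merge (r1 r2 : rel D) x y :
  connect_sym r1 ->
  (forall u w, r2 u w -> connect r1 u w \/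
     (connect r1 u x /\ connect r1 y w) \/ (connect r1 u y /\ connect r1 x w)) ->
  ncls r1 <= (ncls r2).+1.
Proof.
move=> sym H.
pose D' := [set u | ~~ connect r1 x u].
have inv u w : u \in D' -> connect r2 u w ->
    connect r1 u w \/ (connect r1 u y /\ connect r1 x w).
  rewrite inE => nxu /connectP [p]; elim/last_ind: p w => [|p v IH] w /=.
    by move=> _ ->; left; exact: connect0.
  rewrite rcons_path last_rcons => /andP[pp lr] lw; subst w.
  have {IH} := IH _ pp erefl.
  case: (H _ _ lr) => [h|[[h1 h2]|[h1 h2]]] [[k]|[k1 k2]].
  - by left; apply: connect_trans k h.
  - by right; split=> //; apply: connect_trans k2 h.
  - by case/negP: nxu; rewrite sym; apply: connect_trans k h1.
  - by left; apply: connect_trans k1 h2.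
  - by right; split=> //; apply: connect_trans k h1.
  - by right; split=> //.
have key u w : u \in D' -> w \in D' -> connect r2 u w -> connect r1 u w.
  move=> uD wD /(inv _ _ uD) [//|[_ k]].
  by move: wD; rewrite inE k.
have sub : [set cls r1 u | u : D] \subset cls r1 x |: (cls r1 @: D').
  apply/subsetP => C /imsetP[u _ ->]; rewrite !inE.
  case: (boolP (u \in D')) => uD; first by rewrite imset_f ?orbT.
  by move: uD; rewrite inE negbK => k; rewrite (cls_eq sym k) eqxx.
rewrite /ncls (leq_trans (subset_leq_card sub)) // cardsU1.
rewrite -add1n leq_add // ?leq_b1 //.

apply: (leq_trans (card_imset_le (g := cls r2) _)).
  move=> u w uD wD e; apply: cls_eq => //; apply: key => //.
  have : w \in cls r2 w by rewrite inE connect0.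
  by rewrite -e inE.
by apply: subset_leq_card; apply: imsetS; apply/subsetP.
Qed.

Lemma ncls_eq (r1 r2 : rel D) : connect r1 =2 connect r2 -> ncls r1 = ncls r2.
Proof.
move=> H; rewrite /ncls.
have E : cls r1 =1 cls r2 by move=> u; apply/setP => w; rewrite !inE H.
by rewrite (eq_imset _ E).
Qed.

Lemma ncyc1 : ncyc 1%g = #|D|.
Proof.
have E : porbit (1%g : {perm D}) =1 (@set1 D).
  move=> x; apply/setP => y; rewrite porbit_fconnect inE.
  by rewrite (@eq_fconnect _ _ id) ?fconnect_id // => z; exact: perm1.
by rewrite /ncyc /porbits (eq_imset _ E) card_imset //; exact: set1_inj.
Qed.

Lemma ncomp1 e : ncomp e 1%g = ncyc e.
Proof.
rewrite /ncomp /ncls /ncyc /porbits.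
suff E : cls (rel2 e 1) =1 porbit e by rewrite (eq_imset _ E).
move=> u; apply/setP => w; rewrite inE porbit_fconnect; apply/idP/idP.
  apply: connect_sub => v v' /orP[] /eqP ->; first exact: fconnect1.
  by rewrite perm1 connect0.
by apply: fconnect_sub_conn => v; rewrite /rel2 eqxx.
Qed.

Lemma fconnect_mul_conn e n u w :
  fconnect (e * n)%g u w -> connect (rel2 e n) u w.
Proof.
apply: connect_sub => v v' /eqP <-; rewrite permM.
apply: (@connect_trans _ _ (e v)); apply: connect1; by rewrite /rel2 eqxx ?orbT.
Qed.

Lemma genus_ineq e n :
  ncyc e + ncyc n + ncyc (e * n)%g <= #|D| + (ncomp e n).*2.
Proof.
have [m] := ubnP #|[pred z | n z != z]|; elim: m n => // m IHm n /ltnSE le_nm.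
case: (pickP (fun z => n z != z)) => [x nx | nid]; last first.
  have -> : n = 1%g.
    by apply/permP => z; apply/eqP; rewrite perm1; move: (nid z) => /= /negbFE.
  by rewrite ncyc1 ncomp1 mulg1; lia.
set t := tperm x (n x); set n2 := (n * t)%g.
have n2x : n2 x = x by rewrite permM tpermR.
have le2 : #|[pred z | n2 z != z]| < m.
  rewrite (cardD1 x) !inE nx in le_nm; apply: leq_ltn_trans le_nm.
  apply: subset_leq_card; apply/subsetP=> z; rewrite !inE permM.
  have [-> | nzx] := eqVneq z x; first by rewrite tpermR eqxx.
  rewrite /=; apply: contra => /eqP nz; rewrite nz tpermD // 1?eq_sym //.
  apply/eqP => nxz; have := nz; rewrite nxz.
  move=> /perm_inj nxx.
  by rewrite nxx eqxx in nx.
have IH := IHm n2 le2.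
have nn2 : n = (n2 * t)%g by rewrite /n2 -mulgA tperm2 mulg1.
have c1 := ncyc_mult n x (n x).
have xin : x \in porbit n (n x) by rewrite porbit_sym porbit_fconnect fconnect1.
rewrite xin eq_sym nx -/t -/n2 /= in c1.
have en : (e * n)%g = (e * n2 * t)%g by rewrite nn2 mulgA.
have c2 := ncyc_mult (e * n2)%g x (n x).
rewrite -/t -en eq_sym nx in c2.
pose r := rel2 e n; pose r2 := rel2 e n2.
have sym2 : connect_sym r2 := rel2_sym e n2.
have H1 u w : r u w -> connect r2 u w \/
     (connect r2 u x /\ connect r2 (n x) w) \/ (connect r2 u (n x) /\ connect r2 x w).
  case/orP => /eqP ->; first by left; apply: connect1; rewrite /r2 /rel2 eqxx.
  have -> : n u = t (n2 u) by rewrite {1}nn2 permM.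
  case: tpermP => [n2u|n2u|_ _].
  - right; left; rewrite -n2x in n2u; rewrite (perm_inj n2u) !connect0 //.
  - right; right; split; last exact: connect0.
    by apply: connect1; rewrite /r2 /rel2 n2u eqxx orbT.
  - by left; apply: connect1; rewrite /r2 /rel2 eqxx orbT.
case: (boolP (connect r2 x (n x))) => cx.
  have E : connect r =2 connect r2.
    move=> u w; apply/idP/idP.
      apply: connect_sub => v v' /H1 [//|[[k1 k2]|[k1 k2]]].
        by apply: connect_trans (connect_trans k1 cx) k2.
      by apply: connect_trans (connect_trans k1 _) k2; rewrite sym2.
    apply: connect_sub => v v' /orP[] /eqP ->.
      by apply: connect1; rewrite /r /rel2 eqxx.
    rewrite /n2 permM; case: tpermP => [nv|nv|_ _].
    - apply: (@connect_trans _ _ x); apply: connect1; by rewrite /r /rel2 ?nv eqxx orbT.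
    - by rewrite -(perm_inj nv) connect0.
    - by apply: connect1; rewrite /r /rel2 eqxx orbT.
  have ce : ncomp e n = ncomp e n2 by apply: ncls_eq.
  rewrite ce; move: IH; lia.
have nx2 : x \notin porbit (e * n2)%g (n x).
  apply: contra cx; rewrite porbit_fconnect => /fconnect_mul_conn.
  by rewrite sym2.
rewrite nx2 in c2.
have cm : ncls r2 <= (ncls r).+1.
  by apply: (ncls_merge (x := x) (y := n x)) => // u w /H1.
rewrite /ncomp -/r -/r2 in IH *; move: IH; lia.
Qed.
End Cyc.

Section Cross.
Variable D : finType.
Implicit Types p q e n al sg : {perm D}.
Implicit Types u v w x y z a b c g : D.
Implicit Types P Q : seq D.

Lemma connect_inv (r : rel D) (S : pred D) u w :
  (forall v v', S v -> r v v' -> S v') -> S u -> connect r u w -> S w.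
Proof.
move=> H uS /connectP[p]; elim: p u uS => [|v p IH] u uS /=; first by move=> _ ->.
case/andP => ruv pv lw; exact: (IH v (H _ _ uS ruv) pv lw).
Qed.

Lemma porbit_trans p u v w : v \in porbit p u -> w \in porbit p v -> w \in porbit p u.
Proof. by rewrite -eq_porbit_mem => /eqP ->. Qed.

Lemma merge_in p x y : x \notin porbit p y -> x \in porbit (p * tperm x y)%g y.
Proof.
move=> nxy; have xy : x != y by apply: contraNneq nxy => ->; exact: porbit_id.
have c1 := ncyc_mult p x y; have c2 := ncyc_mult (p * tperm x y)%g x y.
rewrite -mulgA tperm2 mulg1 nxy xy in c1 c2.
by case: (x \in _) c2 => //=; lia.
Qed.

Lemma split_out p x y : x \in porbit p y -> x != y -> x \notin porbit (p * tperm x y)%g y.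
Proof.
move=> xin xy; have c1 := ncyc_mult p x y; have c2 := ncyc_mult (p * tperm x y)%g x y.
rewrite -mulgA tperm2 mulg1 xin xy in c1 c2.
by case: (x \in _) c2 => //=; lia.
Qed.

Lemma merge_sub p x y u :
  x \in porbit (p * tperm x y)%g y -> porbit p u \subset porbit (p * tperm x y)%g u.
Proof.
move=> xin; apply/subsetP => w; rewrite !porbit_fconnect.
apply: connect_sub => v v' /eqP <-{v'}.
have -> : p v = tperm x y ((p * tperm x y)%g v) by rewrite permM tpermK.
case: tpermP => [e1|e2|_ _]; last exact: fconnect1.
- apply: (@connect_trans _ _ x); first by apply: connect1; rewrite /= e1.
  by rewrite -porbit_fconnect porbit_sym.
- apply: (@connect_trans _ _ y); first by apply: connect1; rewrite /= e2.
  by rewrite -porbit_fconnect.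
Qed.

Lemma unchanged_sub p x y w :
  x \notin porbit p w -> y \notin porbit p w ->
  porbit (p * tperm x y)%g w \subset porbit p w.
Proof.
move=> nx ny; apply/subsetP => z; rewrite porbit_fconnect.
apply: (connect_inv (S := mem (porbit p w))); last exact: porbit_id.
move=> v v' vS /eqP <-; rewrite permM.
have pv : p v \in porbit p w by apply: porbit_trans vS _; rewrite porbit_fconnect fconnect1.
by rewrite tpermD //; [apply: contraNneq nx => ->|apply: contraNneq ny => ->].
Qed.

Lemma unchanged p x y w :
  x \notin porbit p w -> y \notin porbit p w ->
  porbit (p * tperm x y)%g w = porbit p w.
Proof.
move=> nx ny; apply/eqP; rewrite eqEsubset unchanged_sub //=.
have S := unchanged_sub nx ny.
have -> : porbit p w = porbit ((p * tperm x y) * tperm x y)%g w by rewrite -mulgA tperm2 mulg1.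
by apply: unchanged_sub; [move: nx|move: ny]; apply: contra => /(subsetP S).
Qed.

Lemma splice p x u w : u != x -> w != x -> w \in porbit p u ->
  w \in porbit (p * tperm x (p x))%g u.
Proof.
move=> ux wx; rewrite !porbit_fconnect => /iter_findex wE; rewrite -wE in wx *.
move: (findex p u w) wx => i; set q := (p * tperm x (p x))%g.
have step v : v != x -> p v != x -> q v = p v.
  move=> vx pvx; rewrite permM tpermD //; first by rewrite eq_sym.
  by rewrite (inj_eq perm_inj) eq_sym.
have [N] := ubnP i; elim: N i => // N IHN [|i] /ltnSE lt hi; first exact: connect0.
case: (eqVneq (iter i p u) x) => vx.
  case: i lt hi vx IHN => [|j] lt hi vx IHN; first by move: ux; rewrite -vx /= eqxx.
  have v0x : iter j p u != x.
    apply: contraNneq hi => e.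
    have px : p x = x by rewrite -{1}e -iterS vx.
    by rewrite iterS vx px.
  apply: (@connect_trans _ _ (iter j p u)); first exact: IHN (ltnW lt) v0x.
  by apply: connect1; rewrite /= permM -iterS vx tpermL -vx iterS.
apply: (@connect_trans _ _ (iter i p u)); first exact: IHN _ vx.
by apply: connect1; rewrite /= step // -iterS.
Qed.

Lemma tperm_id4 (x y a c v : D) : x != c -> x != y -> a != c -> (x == a -> y != c) ->
  tperm (if x == a then y else a) c (tperm x y v) = tperm x (tperm a c y) (tperm a c v).
Proof.
move=> xc xy ac H.
case: (eqVneq x a) H ac => [<-{a} /(_ erefl) yc _ | xa _ ac].
  rewrite [tperm x c y]tpermD //; last by rewrite eq_sym.
  by do !case: tpermP => //; move=> *; subst; rewrite ?eqxx in xc xy yc *.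
by do !case: tpermP => //; move=> *; subst; rewrite ?eqxx in xc xy ac xa *.
Qed.

Fixpoint walk (al sg : {perm D}) (u : D) (P : seq D) (w : D) : bool :=
  if P is g :: P' then (g \in porbit sg u) && walk al sg (al g) P' w
  else w \in porbit sg u.

Definition vd (al : {perm D}) u P w := [:: u, w & P ++ map al P].
Definition conn (al sg : {perm D}) := forall u w, connect (rel2 al sg) u w.
Definition tight (al sg : {perm D}) :=
  ncyc al + ncyc sg + ncyc (al * sg)%g = #|D| + 2 /\ conn al sg.

Lemma porbit_conn al sg u w : w \in porbit sg u -> connect (rel2 al sg) u w.
Proof.
by rewrite porbit_fconnect; apply: fconnect_sub_conn => v; rewrite /rel2 eqxx orbT.
Qed.

Lemma walk_conn al sg u P w : walk al sg u P w -> connect (rel2 al sg) u w.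
Proof.
elim: P u => [|g P IH] u /=; first exact: porbit_conn.
case/andP => /(porbit_conn al) h /IH; apply: connect_trans.
apply: connect_trans h _; apply: connect1; by rewrite /rel2 eqxx.
Qed.

Lemma walk_start al sg u v P w : v \in porbit sg u -> walk al sg v P w -> walk al sg u P w.
Proof.
case: P => [|g P] /= vu; [exact: porbit_trans | by case/andP => /(porbit_trans vu) -> ->].
Qed.

Lemma walk_mono al sg sg' u P w :
  (forall z, z \in u :: map al P -> porbit sg z \subset porbit sg' z) ->
  walk al sg u P w -> walk al sg' u P w.
Proof.
elim: P u => [|g P IH] u /= H.
  by move/(subsetP (H u (mem_head _ _))).
case/andP => /(subsetP (H u (mem_head _ _))) -> /IH -> // z zin.
by apply: H; rewrite inE zin orbT.
Qed.

Lemma conn_ncomp al sg : conn al sg -> ncomp al sg <= 1.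
Proof.
move=> C; apply/card_le1P => X /imsetP[u _ ->] Y.
rewrite !inE; apply/imsetP/eqP => [[v _ ->]|->]; last by exists u.
by apply: cls_eq; [exact: rel2_sym | exact: C].
Qed.

Lemma disj_ext sg (A B : seq D) u v w :
  (forall z w, z \in A -> w \in B -> w \notin porbit sg z) ->
  u \in A -> v \in porbit sg u -> w \in B -> v \notin porbit sg w.
Proof.
move=> H uA vu wB; apply/negP => vw; move/negP: (H _ _ uA wB); apply.
by apply: porbit_trans vu _; rewrite porbit_sym.
Qed.

Lemma fixed_orbit p a b : p a = a -> b \in porbit p a -> b = a.
Proof.
move=> pa; rewrite porbit_fconnect => /(connect_inv (S := pred1 a)) H.
apply/eqP; apply: H; last by rewrite /= eqxx.
by move=> v v' /= /eqP -> /eqP <-; rewrite pa.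
Qed.
End Cross.

Section Cross2.
Variable D : finType.
Implicit Types al sg : {perm D}.
Implicit Types u v w x y z a b c e g : D.
Implicit Types P Q : seq D.

Lemma crossing_base al sg a b c e Q :
  tight al sg -> a != c ->
  c \in porbit (al * sg)%g a ->
  b \in porbit (al * sg * tperm a c)%g a ->
  e \in porbit (al * sg * tperm a c)%g c ->
  c \in porbit sg a ->
  walk al sg b Q e ->
  (forall z, z \in b :: map al Q -> a \notin porbit sg z) -> False.
Proof.
move=> [G C] ac cphi bpsi epsi csg wQ disj.
set t := tperm a c; set sg' := (sg * t)%g.
have c1 := ncyc_mult sg a c; rewrite porbit_sym csg ac /= -/t -/sg' in c1.
have c2 := ncyc_mult (al * sg)%g a c; rewrite porbit_sym cphi ac /= -/t in c2.
have phi' : (al * sg * t)%g = (al * sg')%g by rewrite mulgA.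
rewrite phi' in c2 bpsi epsi.
have unch z : z \in b :: map al Q -> porbit sg' z = porbit sg z.
  move=> zQ; apply: unchanged; rewrite ?disj //.
  apply: contra (disj z zQ) => cz; apply: porbit_trans cz _.
  by rewrite porbit_sym.
have wQ' : walk al sg' b Q e.
  by apply: walk_mono wQ => z /unch ->; exact: subxx.
have r'ac : connect (rel2 al sg') a c.
  apply: connect_trans (fconnect_mul_conn _) _; first by rewrite -porbit_fconnect; exact: bpsi.
  apply: connect_trans (walk_conn wQ') _.
  rewrite rel2_sym; apply: fconnect_mul_conn; by rewrite -porbit_fconnect.
have C' : conn al sg'.
  move=> u w; apply: connect_sub (C u w) => v _ /orP[] /eqP ->.
    by apply: connect1; rewrite /rel2 eqxx.
  have -> : sg v = t (sg' v) by rewrite permM tpermK.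
  case: tpermP => [h|h|_ _]; last by apply: connect1; rewrite /rel2 eqxx orbT.
    apply: connect_trans r'ac; apply: connect1; by rewrite /rel2 h eqxx orbT.
  apply: (@connect_trans _ _ c); first by apply: connect1; rewrite /rel2 h eqxx orbT.
  by rewrite rel2_sym.
have GI := genus_ineq al sg'.
have := conn_ncomp C'; move: GI; lia.
Qed.

Lemma arith1 (A S S' F F' N : nat) : A + S + F = N + 2 -> S' + 1.*2 = S + 1 ->
  F' + 0.*2 = F + 1 -> A + S' + F' = N + 2.
Proof. lia. Qed.

Lemma same_orbit p u v : v \in porbit p u -> porbit p v = porbit p u.
Proof. by rewrite -eq_porbit_mem => /eqP. Qed.

Lemma crossing al sg a b c e P Q :
  tight al sg -> a != c ->
  c \in porbit (al * sg)%g a ->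
  b \in porbit (al * sg * tperm a c)%g a ->
  e \in porbit (al * sg * tperm a c)%g c ->
  walk al sg a P c -> walk al sg b Q e ->
  (forall z w, z \in vd al a P c -> w \in vd al b Q e -> w \notin porbit sg z) -> False.
Proof.
have [N] := ubnP (size P); elim: N sg a P => // N IH sg a P /ltnSE szP T ac cphi bpsi epsi wP wQ disj.
have inQ z : z \in b :: map al Q -> z \in vd al b Q e.
  by rewrite /vd !inE mem_cat => /orP[->|->]; rewrite ?orbT.
have aP : a \in vd al a P c by rewrite inE eqxx.
case: (boolP (c \in porbit sg a)) => csg.
  apply: (crossing_base T ac cphi bpsi epsi csg wQ) => z zQ.
  by rewrite porbit_sym; apply: disj aP (inQ _ zQ).
case: P szP wP disj aP => [|g P] szP /= wP disj aP; first by rewrite wP in csg.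
case/andP: wP => ga wP.
have subP z : z \in vd al a P c -> z \in vd al a (g :: P) c.
  rewrite /vd /= !(inE, mem_cat) /=.
  by case/or3P => [->|->|/orP[->|->]]; rewrite ?orbT.
case: (boolP (al g \in porbit sg a)) => aga.
  apply: (IH sg a P _ T ac cphi bpsi epsi (walk_start aga wP) wQ) => //.
  by move=> z w /subP; apply: disj.
case: T => [G C].
set phi := (al * sg)%g; set x := g; set y := phi x.
have ysg : y \in porbit sg (al g) by rewrite /y /phi permM porbit_fconnect fconnect1.
have agP : al g \in vd al a (g :: P) c by rewrite /vd /= !(inE, mem_cat) /= eqxx !orbT.
have xny : x \notin porbit sg y.
  apply: contra aga => xy; apply: porbit_trans ga _.
  by apply: (@porbit_trans _ _ _ y); rewrite porbit_sym.
have xy : x != y by apply: contraNneq xny => ->; exact: porbit_id.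
set t := tperm x y; set sg' := (sg * t)%g.
have mrg : x \in porbit sg' y := merge_in xny.
have sub u : porbit sg u \subset porbit sg' u := merge_sub u mrg.
have c1 := ncyc_mult sg x y; rewrite xny xy -/t -/sg' /= in c1.
have c2 := ncyc_mult phi x y.
have xphi : x \in porbit phi y by rewrite porbit_sym porbit_fconnect fconnect1.
rewrite xphi xy /= -/t in c2.
have phi' : (phi * t)%g = (al * sg')%g by rewrite mulgA.
rewrite phi' in c2.
have T' : tight al sg'.
  split; first by move: G c1 c2; rewrite -/phi; apply: arith1.
  move=> u w; apply: connect_sub (C u w) => v _ /orP[] /eqP ->.
    by apply: connect1; rewrite /rel2 eqxx.
  apply: porbit_conn; apply: (subsetP (sub v)).
  by rewrite porbit_fconnect fconnect1.
have xc : x != c by apply: contraNneq csg => <-.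
have xQ w : w \in vd al b Q e -> x \notin porbit sg w.
  by move=> wQ'; apply: (disj_ext disj aP ga wQ').
have yQ w : w \in vd al b Q e -> y \notin porbit sg w.
  by move=> wQ'; apply: (disj_ext disj agP ysg wQ').
have unchQ w : w \in vd al b Q e -> porbit sg' w = porbit sg w.
  by move=> wQ'; apply: unchanged; [apply: xQ | apply: yQ].
have bQ : b \in vd al b Q e by rewrite inE eqxx.
have eQ : e \in vd al b Q e by rewrite !inE eqxx orbT.
have xb : x != b by apply: contraTneq (xQ _ bQ) => ->; rewrite negbK porbit_id.
have xe : x != e by apply: contraTneq (xQ _ eQ) => ->; rewrite negbK porbit_id.
set psi := (phi * tperm a c)%g.
set a' := if x == a then y else a.
have ya : x == a -> y != c.
  move=> /eqP xa; apply/negP => /eqP yc.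
  have pa : psi a = a by rewrite /psi permM -xa -/y yc tpermR xa.
  have := fixed_orbit pa bpsi => ba.
  by move: (disj _ _ aP bQ); rewrite ba porbit_id.
have a'x : a' != x.
  by rewrite /a'; case: (eqVneq x a) => [xa|nxa] /=; rewrite eq_sym.
have a'c : a' != c.
  rewrite /a'; case: (eqVneq x a) => [xa|nxa] //=; exact: ya (introT eqP xa).
have a'phi : a' \in porbit phi a.
  rewrite /a'; case: (eqVneq x a) => [xa|nxa] /=; last exact: porbit_id.
  by rewrite porbit_fconnect -xa fconnect1.
have a'psi : a' \in porbit psi a.
  rewrite /a'; case: (eqVneq x a) => [xa|nxa] /=; last exact: porbit_id.
  rewrite porbit_fconnect; apply: connect1; rewrite /= /psi permM -xa -/y tpermD //.
  by rewrite eq_sym ya // xa.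
have phiE : (al * sg')%g = (phi * tperm x (phi x))%g by rewrite -phi'.
have psiE : (al * sg' * tperm a' c)%g = (psi * tperm x (psi x))%g.
  apply/permP => z; rewrite -phi' !permM /psi.
  have yE : sg (al x) = y by rewrite /y /phi permM.
  by rewrite yE /a' /t; apply: tperm_id4.
have cphi' : c \in porbit (al * sg')%g a'.
  rewrite phiE; apply: splice => //; first by rewrite eq_sym.
  by rewrite (same_orbit a'phi).
have bpsi' : b \in porbit (al * sg' * tperm a' c)%g a'.
  rewrite psiE; apply: splice => //; first by rewrite eq_sym.
  by rewrite (same_orbit a'psi).
have epsi' : e \in porbit (al * sg' * tperm a' c)%g c.
  by rewrite psiE; apply: splice => //; rewrite eq_sym.
have a'x' : a' \in porbit sg' x.
  rewrite /a'; case: (eqVneq x a) => [xa|nxa] /=; first by rewrite porbit_sym.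
  by rewrite porbit_sym; apply: (subsetP (sub a)).
have agx : al g \in porbit sg' x.
  apply: (@porbit_trans _ _ _ y); first by rewrite porbit_sym.
  by rewrite porbit_sym; apply: (subsetP (sub (al g))).
have wP' : walk al sg' a' P c.
  apply: (walk_start (v := al g)); first by rewrite (same_orbit a'x').
  by apply: walk_mono wP => z _; exact: sub.
have wQ' : walk al sg' b Q e.
  by apply: walk_mono wQ => z /inQ /unchQ ->; exact: subxx.
apply: (IH sg' a' P _ T' a'c cphi' bpsi' epsi' wP' wQ') => // z w zP wQ''.
rewrite porbit_sym unchQ //.
move: zP; rewrite /vd inE; case/orP => [/eqP ->|zP].
  rewrite /a'; case: (eqVneq x a) => [xa|nxa] /=; first exact: yQ.
  by rewrite porbit_sym; apply: disj.
by rewrite porbit_sym; apply: disj => //; apply: subP; rewrite /vd inE zP orbT.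
Qed.
End Cross2.

Section Fcard.
Variable D : finType.
Implicit Types p : {perm D}.

Lemma porbitsT p : porbits p = porbit p @: [set: D].
Proof. by apply/setP => C; apply/imsetP/imsetP => [[x _ ->]|[x _ ->]]; exists x. Qed.

Lemma ncyc_fcard p : ncyc p = fcard p D.
Proof.
have sym : connect_sym (frel p) := fconnect_sym (@perm_inj _ p).
rewrite /ncyc /n_comp_mem.
have -> : porbits p = porbit p @: [set x | froots p x].
  apply/setP => C; apply/imsetP/imsetP => [[x _ ->]|[x _ ->]]; last by exists x.
  exists (froot p x); first by rewrite inE /roots root_root.
  apply/eqP; rewrite eq_porbit_mem porbit_fconnect.
  by rewrite sym connect_root.
rewrite card_in_imset.
  by apply: eq_card => x; rewrite !inE andbT.
move=> x y; rewrite !inE => /eqP rx /eqP ry /eqP.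
rewrite eq_porbit_mem porbit_fconnect => /(rootP sym).
by rewrite rx ry.
Qed.
End Fcard.

Section Graph.
Variables (V D : finType) (tl : D -> V) (alpha sigma : {perm D}).
Hypothesis pg : plane_graph tl alpha sigma.

Local Notation hd := (Defs.head tl alpha).
Local Notation adjG := (adj tl alpha).

Lemma aK : forall z, alpha (alpha z) = z.
Proof. by case: pg => [[]]. Qed.
Lemma aF : forall z, alpha z != z.
Proof. by case: pg => [[]]. Qed.
Lemma tlS : forall z, tl (sigma z) = tl z.
Proof. by case: pg => [[]]. Qed.
Lemma tlC : forall z z', tl z = tl z' -> fconnect sigma z z'.
Proof. by case: pg => [[]]. Qed.

Lemma tl_fconnect z z' : fconnect sigma z z' -> tl z' = tl z.
Proof.
move/iter_findex => <-; elim: (findex _ _ _) => //= i IH; by rewrite tlS.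
Qed.

Lemma samev_tl u w : (w \in porbit sigma u) = (tl w == tl u).
Proof.
rewrite porbit_fconnect; apply/idP/eqP; first exact: tl_fconnect.
by move=> e; apply: tlC.
Qed.

Fixpoint gwalk (u : V) (P : seq D) (w : V) : bool :=
  if P is g :: P' then (tl g == u) && gwalk (hd g) P' w else u == w.

Lemma walk_of_gwalk a P c : gwalk (tl a) P (tl c) -> walk alpha sigma a P c.
Proof.
elim: P a => [|g P IH] a /=; first by rewrite samev_tl eq_sym.
by case/andP => ga /IH ->; rewrite samev_tl ga.
Qed.

Lemma adjP u v : reflect (exists g, tl g = u /\ hd g = v) (adjG u v).
Proof.
apply: (iffP existsP) => [[g /andP[/eqP <- /eqP <-]]|[g [<- <-]]]; first by exists g.
by exists g; rewrite !eqxx.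
Qed.

Lemma conn_graph : conn alpha sigma.
Proof.
case: pg => _ _ conG _.
have same z z' : tl z = tl z' -> connect (rel2 alpha sigma) z z'.
  move/tlC; apply: fconnect_sub_conn => v; by rewrite /rel2 eqxx orbT.
move=> u w; have := conG (tl u) (tl w).
case/connectP => p; elim/last_ind: p w => [|p v IH] w /=.
  by move=> _ e; apply: same; rewrite e.
rewrite rcons_path last_rcons => /andP[pp /adjP[g [gl gh]]] vw.
apply: connect_trans (IH g pp gl) _.
apply: connect_trans (same (alpha g) w _); first by apply: connect1; rewrite /rel2 eqxx.
by rewrite vw -gh.
Qed.

Lemma ncyc_alpha : (ncyc alpha).*2 = #|D|.
Proof.
rewrite ncyc_fcard -muln2 fcard_order_set //; first exact: perm_inj.
  apply/subsetP => x _; rewrite inE /fingraph.order.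
  have -> : #|fconnect alpha x| = #|[set x; alpha x]|.
    apply: eq_card => y; rewrite !inE; apply/idP/idP.
      apply: (connect_inv (S := fun y => (y == x) || (y == alpha x))); last by rewrite eqxx.
      by move=> v v' /orP[] /eqP -> /eqP <-; rewrite ?aK eqxx ?orbT.
    by case/orP => /eqP ->; [exact: connect0 | exact: fconnect1].
  by rewrite cards2 (eq_sym x) aF.
Qed.

Lemma card_V (d : D) : #|V| = ncyc sigma.
Proof.
case: pg => _ _ conG _.
have surj : tl @: [set: D] = [set: V].
  apply/setP => v; rewrite inE; apply/imsetP.
  have := conG (tl d) v; case/connectP => p; case/lastP: p => [|p v'] /=.
    by move=> _ ->; exists d.
  rewrite rcons_path last_rcons => /andP[_ /adjP[g [_ gh]]] ->.
  by exists (alpha g).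
rewrite -cardsT -surj /ncyc porbitsT.
apply/eqP; rewrite eqn_leq; apply/andP; split; apply: card_imset_le => u w _ _.
  by move/eqP; rewrite eq_porbit_mem samev_tl => /eqP.
by move=> e; apply/eqP; rewrite eq_porbit_mem samev_tl e.
Qed.

Lemma tight_graph (d : D) : tight alpha sigma.
Proof.
split; last exact: conn_graph.
case: pg => _ _ _ [D0|].
  have : 0 < #|D| by apply/card_gt0P; exists d.
  by rewrite D0.
rewrite /n_faces /n_edges -(card_V d) -ncyc_alpha.
have -> : fcard (phi alpha sigma) D = ncyc (alpha * sigma)%g.
  by rewrite ncyc_fcard; apply: eq_fcard => z; rewrite permM.
rewrite -muln2 mulnK //; lia.
Qed.

End Graph.

Section Dist.
Variables (V D : finType) (tl : D -> V) (alpha sigma : {perm D}).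
Hypothesis pg : plane_graph tl alpha sigma.

Local Notation hd := (Defs.head tl alpha).
Local Notation adjG := (adj tl alpha).
Local Notation gw := (gwalk tl alpha).
Local Notation dst := (dist tl alpha).

Definition gend (u : V) (P : seq D) := last u (map hd P).

Lemma gwalk_cat u P1 P2 w :
  gw u (P1 ++ P2) w = gw u P1 (gend u P1) && gw (gend u P1) P2 w.
Proof.
elim: P1 u => [|g P1 IH] u /=; first by rewrite eqxx.
by rewrite IH andbA.
Qed.

Lemma gwalk_end u P w : gw u P w -> w = gend u P.
Proof.
elim: P u => [|g P IH] u /=; first by move/eqP.
by case/andP => _ /IH.
Qed.

Lemma gwalk_rcons u P g w : gw u (rcons P g) w = gw u P (tl g) && (hd g == w).
Proof.
rewrite -cats1 gwalk_cat /=.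
apply/andP/andP => [[h /andP[/eqP e ->]]|[h ->]]; first by rewrite e h.
by rewrite -(gwalk_end h) h eqxx.
Qed.

Lemma ball_walk k u v :
  reflect (exists P, gw u P v /\ size P <= k) (v \in ball tl alpha k u).
Proof.
elim: k v => [|k IH] v.
  rewrite /ball /= inE; apply: (iffP eqP) => [->|[[|g P] [/= /eqP]]] //.
  by exists [::]; rewrite /= eqxx.
have -> : ball tl alpha k.+1 u =
   ball tl alpha k u :|: [set y | [exists x in ball tl alpha k u, adjG x y]] by [].
rewrite in_setU inE; apply: (iffP orP).
  case=> [/IH [P [hP sP]]|/existsP[x /andP[/IH [P [hP sP]] /adjP[g [gx gv]]]]].
    by exists P; split => //; apply: leqW.
  by exists (rcons P g); rewrite gwalk_rcons size_rcons gx hP gv eqxx.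
case=> P; case/lastP: P => [|P g] [hP sP].
  by left; apply/IH; exists [::].
rewrite size_rcons ltnS in sP; rewrite gwalk_rcons in hP.
case/andP: hP => hP /eqP gv.
right; apply/existsP; exists (tl g); rewrite (introT (IH _) (ex_intro _ P (conj hP sP))).
by apply/adjP; exists g.
Qed.

Lemma walk_path u p : path adjG u p -> exists P, gw u P (last u p) /\ size P = size p.
Proof.
elim: p u => [|v' p IH] u /=; first by exists [::]; rewrite /= eqxx.
case/andP => /adjP[g [gu gv]] pp.
have [P [hP sP]] := IH v' pp.
by exists (g :: P); rewrite /= gu eqxx gv hP sP.
Qed.

Lemma walk_short u v : exists P, gw u P v /\ size P < #|V|.
Proof.
case: pg => _ _ conG _.
have := conG u v; case/connectP => p pp ->; case: (shortenP pp) => p' pp' up' _.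
have [P [hP sP]] := walk_path pp'.
exists P; split => //; rewrite sP.
by have := card_uniqP up'; rewrite /= => <-; apply: max_card.
Qed.


Lemma dist_ltV u v : dst u v < #|V|.
Proof.
have [P [hP sP]] := walk_short u v.
rewrite /dist -[X in _ < X](size_iota 0 #|V|) -has_find.
apply/hasP; exists (size P); first by rewrite mem_iota.
by apply/ball_walk; exists P.
Qed.

Lemma dist_ball u v : v \in ball tl alpha (dst u v) u.
Proof.
have := dist_ltV u v; rewrite /dist -[X in _ < X](size_iota 0 #|V|) -has_find => hf.
by have := nth_find 0 hf; rewrite nth_iota // -{2}(size_iota 0 #|V|) -has_find.
Qed.

Lemma dist_le u P v : gw u P v -> dst u v <= size P.
Proof.
move=> hP; case: (ltnP (size P) #|V|) => sP; last exact: leq_trans (ltnW (dist_ltV u v)) sP.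
rewrite leqNgt; apply/negP => lt.
have := before_find 0 lt; rewrite nth_iota // add0n => /negbT/negP; apply.
by apply/ball_walk; exists P.
Qed.

Lemma dist_walk u v : exists P, gw u P v /\ size P = dst u v.
Proof.
have /ball_walk [P [hP sP]] := dist_ball u v.
by exists P; split => //; apply/eqP; rewrite eqn_leq sP dist_le.
Qed.

Lemma dist_tri u v w : dst u w <= dst u v + dst v w.
Proof.
have [P1 [h1 s1]] := dist_walk u v; have [P2 [h2 s2]] := dist_walk v w.
rewrite -s1 -s2 -size_cat; apply: dist_le.
by rewrite gwalk_cat -(gwalk_end h1) h1.
Qed.

Lemma dist_split a P c z : gw (tl a) P (tl c) -> z \in vd alpha a P c ->
  dst (tl a) (tl z) + dst (tl z) (tl c) <= size P.
Proof.
move=> hP; rewrite /vd !inE mem_cat => /or3P[/eqP->|/eqP->|/orP[zP|]].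
- by rewrite (leq_trans (leq_add (dist_le (P := [::]) _) (dist_le hP))) //= eqxx.
- by rewrite (leq_trans (leq_add (dist_le hP) (dist_le (P := [::]) _))) ?addn0 //= eqxx.
- case/splitPr: P / zP hP => P1 P2.
  rewrite gwalk_cat => /andP[h1 /= /andP[/eqP e h2]].
  rewrite size_cat; apply: leq_add; first by rewrite e (dist_le h1).
  by apply: (dist_le (P := z :: P2)); rewrite /= eqxx h2.
- case/mapP => g gP ->{z}; case/splitPr: P / gP hP => P1 P2.
  rewrite gwalk_cat => /andP[h1 /= /andP[/eqP e h2]].
  rewrite size_cat /= -addSnnS; apply: leq_add; last exact: dist_le h2.
  rewrite -(size_rcons P1 g); apply: dist_le; rewrite gwalk_rcons e h1 /=.
  exact: eqxx.
Qed.
End Dist.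

Lemma arith_monge (A B P Q x1 x2 y1 y2 AE BC : nat) :
  x1 + x2 <= P -> y1 + y2 <= Q -> AE <= x1 + y2 -> BC <= y1 + x2 -> AE + BC <= P + Q.
Proof. lia. Qed.

Section Face.
Variables (V D : finType) (tl : D -> V) (alpha sigma : {perm D}).
Hypothesis pg : plane_graph tl alpha sigma.
Variable d : D.

Local Notation hd := (Defs.head tl alpha).
Local Notation gw := (gwalk tl alpha).
Local Notation dst := (dist tl alpha).
Local Notation len := (face_length alpha sigma d).
Local Notation ph := (phi alpha sigma).
Local Notation f j := (iter j ph d).
Local Notation vx j := (tl (f j)).

Lemma phE : (alpha * sigma)%g =1 ph.
Proof. by move=> z; rewrite permM. Qed.

Lemma f_inj i j : i < len -> j < len -> f i = f j -> i = j.
Proof.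
move=> il jl e; by rewrite -(findex_iter il) e findex_iter.
Qed.

Lemma f_orbit j : f j \in porbit (alpha * sigma)%g d.
Proof. by rewrite porbit_fconnect (eq_fconnect phE) fconnect_iter. Qed.

Lemma iter_psi a c k j : k + j < len ->
  (forall m, k < m <= k + j -> (f m != a) && (f m != c)) ->
  iter j (alpha * sigma * tperm a c)%g (f k) = f (k + j).
Proof.
elim: j => [|j IH] kj H; first by rewrite addn0.
rewrite iterS IH; first last.
- by move=> m /andP[km mj]; apply: H; rewrite km (leq_trans mj) // addnS.
- by rewrite (leq_trans _ kj) // addnS.
rewrite permM phE addnS /=.
have /andP[ha hc] : (f (k + j).+1 != a) && (f (k + j).+1 != c).
  by apply: H; rewrite addnS leqnn ltnS leq_addr.
by rewrite -iterS tpermD // eq_sym.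
Qed.

Lemma f_neq i j : i < len -> j < len -> i != j -> f i != f j.
Proof. by move=> il jl; apply: contra => /eqP /(f_inj il jl) ->. Qed.

Lemma monge i i' p p' : i < i' -> i' < p -> p < p' -> p' < len ->
  dst (vx i) (vx p') + dst (vx i') (vx p) <= dst (vx i) (vx p) + dst (vx i') (vx p').
Proof.
move=> ii ip pp pl.
have i'l : i' < len by lia.
have il : i < len by lia.
have pl' : p < len by lia.
have [P [hP sP]] := dist_walk pg (vx i) (vx p).
have [Q [hQ sQ]] := dist_walk pg (vx i') (vx p').
case: (boolP (has (fun z => has (fun w => tl w == tl z) (vd alpha (f i') Q (f p')))
                 (vd alpha (f i) P (f p)))) => H.
  case/hasP: H => z zP /hasP [w wQ /eqP ew].
  have h1 := dist_split pg hP zP.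
  have h2 := dist_split pg hQ wQ; rewrite ew in h2.
  have t1 := dist_tri pg (vx i) (tl z) (vx p').
  have t2 := dist_tri pg (vx i') (tl z) (vx p).
  by rewrite -sP -sQ; exact: arith_monge h1 h2 t1 t2.
exfalso; apply: (@crossing _ alpha sigma (f i) (f i') (f p) (f p') P Q).
- exact: tight_graph pg d.
- by apply: f_neq => //; lia.
- by rewrite (same_orbit (f_orbit i)) f_orbit.
- rewrite porbit_fconnect; have <- : i + (i' - i) = i' by lia.
  rewrite -(iter_psi (a := f i) (c := f p)); [exact: fconnect_iter | lia |].
  move=> m /andP[im mi]; rewrite !f_neq //; lia.
- rewrite porbit_fconnect; have <- : p + (p' - p) = p' by lia.
  rewrite -(iter_psi (a := f i) (c := f p)); [exact: fconnect_iter | lia |].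
  move=> m /andP[im mi]; rewrite !f_neq //; lia.
- exact: (walk_of_gwalk (a := f i) (c := f p) pg hP).
- exact: (walk_of_gwalk (a := f i') (c := f p') pg hQ).
move=> z w zP wQ; rewrite (samev_tl pg).
move/hasPn: H => /(_ z zP) /hasPn /(_ w wQ) //.
Qed.

Lemma adj_step j q : dst (vx j) q <= (dst (vx j.+1) q).+1 /\ dst (vx j.+1) q <= (dst (vx j) q).+1.
Proof.
have e1 : vx j.+1 = tl (alpha (f j)) by rewrite iterS /phi (tlS pg).
have h1 : dst (vx j) (vx j.+1) <= 1.
  by apply: (dist_le pg (P := [:: f j])); rewrite /= e1 !eqxx.
have h2 : dst (vx j.+1) (vx j) <= 1.
  by apply: (dist_le pg (P := [:: alpha (f j)])); rewrite /= e1 /Defs.head (aK pg) !eqxx.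
have t1 := dist_tri pg (vx j) (vx j.+1) q.
have t2 := dist_tri pg (vx j.+1) (vx j) q.
split.
  by apply: leq_trans t1 _; apply: leq_trans (leq_add h1 (leqnn _)) _; rewrite add1n.
by apply: leq_trans t2 _; apply: leq_trans (leq_add h2 (leqnn _)) _; rewrite add1n.
Qed.
End Face.

Fixpoint enc (w x : nat) : seq bool :=
  if w is w'.+1 then odd x :: enc w' x./2 else [::].
Definition bits2nat (bs : seq bool) := foldr (fun (b : bool) acc => b + acc.*2) 0 bs.

Lemma enc_size w x : size (enc w x) = w.
Proof. by elim: w x => //= w IH x; rewrite IH. Qed.

Lemma enc_K w x : x < 2 ^ w -> bits2nat (enc w x) = x.
Proof.
elim: w x => [|w IH] x /=; first by rewrite expn0 ltnS leqn0 => /eqP ->.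
move=> lt; rewrite IH ?odd_double_half //.
by rewrite ltn_half_double -mul2n -expnS.
Qed.

Definition encn w ns := nseq w true ++ false :: flatten (map (enc w) ns).
Definition num (s : seq bool) j :=
  let w := find negb s in bits2nat (take w (drop (j * w) (drop w.+1 s))).

Lemma size_encn w ns : size (encn w ns) = w.+1 + w * size ns.
Proof.
rewrite /encn size_cat size_nseq /= size_flatten /shape -map_comp.
have -> : sumn [seq (size \o enc w) i | i <- ns] = w * size ns.
  elim: ns => [|x ns IH] /=; [by rewrite muln0 | by rewrite enc_size IH mulnS].
by rewrite addnS.
Qed.

Lemma num_enc w ns j : (forall x, x \in ns -> x < 2 ^ w) -> j < size ns ->
  num (encn w ns) j = nth 0 ns j.
Proof.
move=> H jn; rewrite /num /encn.
have -> : find negb (nseq w true ++ false :: flatten [seq enc w i | i <- ns]) = w.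
  by rewrite find_cat has_nseq andbF size_nseq /= addn0.
rewrite -cat_rcons drop_size_cat ?size_rcons ?size_nseq //.
elim: ns j H jn => [|x ns IH] [|j] H //= jn.
  by rewrite drop0 take_size_cat ?enc_size // enc_K // H // mem_head.
rewrite mulSnr -drop_drop drop_size_cat ?enc_size // IH //.
by move=> y yn; apply: H; rewrite inE yn orbT.
Qed.

Definition pairs (g h : nat -> nat) (L : seq nat) :=
  flatten (map (fun x => [:: g x; h x]) L).

Lemma size_pairs g h L : size (pairs g h L) = (size L).*2.
Proof. by elim: L => //= x L IH; rewrite IH doubleS. Qed.

Lemma nth_pairs g h L R j : j < size L ->
  nth 0 (pairs g h L ++ R) j.*2 = g (nth 0 L j) /\
  nth 0 (pairs g h L ++ R) j.*2.+1 = h (nth 0 L j).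
Proof. by elim: L j => [|x L IH] [|j] //= jL; apply: IH. Qed.

Lemma nth_pairs_after g h L R k :
  nth 0 (pairs g h L ++ R) ((size L).*2 + k) = nth 0 R k.
Proof. by rewrite nth_cat size_pairs ltnNge leq_addr /= addKn. Qed.

Lemma mem_pairs g h L x : x \in pairs g h L -> exists2 y, y \in L & x = g y \/ x = h y.
Proof.
elim: L => [|y L IH] //=; rewrite !inE => /or3P[/eqP->|/eqP->|/IH[z zL e]].
- by exists y; [rewrite mem_head | left].
- by exists y; [rewrite mem_head | right].
- by exists z => //; rewrite inE zL orbT.
Qed.

Definition dec (s : seq bool) (i p : nat) : nat :=
  let m := num s 0 in
  let j := find (fun j => num s j.*2.+1 == p) (iota 0 m) in
  let m0 := num s j.*2.+2 in
  let ups := count (fun r => num s (m.*2 + r.*2).+2 <= p) (iota 0 i) in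
  let downs := count (fun r => p < num s (m.*2 + r.*2).+1) (iota 0 i) in
  (m0 + ups) - downs.

Lemma find_nth_index (C : seq nat) p : p \in C ->
  find (fun j => nth 0 C j == p) (iota 0 (size C)) = index p C.
Proof.
elim: C => [|x C IH] //=; rewrite inE; case: eqVneq => [->|xp] //= pC.
by rewrite -[1]addn0 iotaDl find_map /preim /= IH.
Qed.

Lemma foldr_minn_le (L : seq nat) b x : x \in L -> foldr minn b L <= x.
Proof.
elim: L => //= y L IH; rewrite inE => /orP[/eqP->|/IH h]; first exact: geq_minl.
exact: leq_trans (geq_minr _ _) h.
Qed.

Lemma foldr_minn_mem (L : seq nat) b : foldr minn b L = b \/ foldr minn b L \in L.
Proof.
elim: L => [|y L IH]; first by left.
rewrite [foldr _ _ _]/= /minn; case: ltnP => h; first by right; rewrite mem_head.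
by case: IH => [->|h']; [left | right; rewrite inE h' orbT].
Qed.

Lemma foldr_minn_leb (L : seq nat) b : foldr minn b L <= b.
Proof. by elim: L => //= y L IH; exact: leq_trans (geq_minr _ _) IH. Qed.

Lemma ar_down (A B A' B' : nat) : A' + B <= A + B' -> B' < A' -> B < A.
Proof. lia. Qed.
Lemma ar_up (A B A' B' : nat) : A' + B <= A + B' -> A < B -> A' < B'.
Proof. lia. Qed.
Lemma ar_step (A B : nat) : A <= B.+1 -> B <= A.+1 -> B + (B < A) = A + (A < B).
Proof. by case: (ltngtP A B) => h /=; lia. Qed.

Lemma ar_inv (A B Z Dn U dn up : nat) : A + Dn = Z + U -> B + dn = A + up ->
  B + (Dn + dn) = Z + (U + up).
Proof. lia. Qed.

Lemma encode_ok (M : nat -> nat -> nat) (l len w : nat) (C : seq nat) :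
  uniq C -> (forall p, p \in C -> p < len) ->
  (forall r q, r.+1 < l -> q \in C -> M r q <= (M r.+1 q).+1 /\ M r.+1 q <= (M r q).+1) ->
  (forall r q q', r.+1 < l -> q \in C -> q' \in C -> q < q' ->
     M r q' + M r.+1 q <= M r q + M r.+1 q') ->
  (forall q, q \in C -> M 0 q < 2 ^ w) -> len < 2 ^ w ->
  exists s, size s = w.+1 + w * (size C + l).*2.+1 /\
   forall i p, i < l -> p \in C -> dec s i p = M i p.
Proof.
move=> uC Clen Lip Mon M0w lenw.
pose down r q := M r.+1 q < M r q.
pose up r q := M r q < M r.+1 q.
pose T1 r := foldr minn len [seq q <- C | ~~ down r q].
pose T2 r := foldr minn len [seq q <- C | up r q].
have downE r q : r.+1 < l -> q \in C -> down r q = (q < T1 r).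
  move=> rl qC; case: (boolP (down r q)) => dq; last first.
    by apply/esym/negbTE; rewrite -leqNgt; apply: foldr_minn_le; rewrite mem_filter dq.
  apply/esym; rewrite ltnNge; apply/negP => T1q.
  case: (foldr_minn_mem [seq q <- C | ~~ down r q] len) => [Tl|].
    by have := Clen q qC; rewrite ltnNge; move: T1q; rewrite /T1 Tl => ->.
  rewrite -/(T1 r) mem_filter => /andP[nd TC].
  move: T1q; rewrite leq_eqVlt => /orP[/eqP e|lt]; first by rewrite e dq in nd.
  by move/negP: nd; apply; apply: ar_down (Mon _ _ _ rl TC qC lt) dq.
have upE r q : r.+1 < l -> q \in C -> up r q = (T2 r <= q).
  move=> rl qC; case: (boolP (up r q)) => uq.
    by apply/esym; apply: foldr_minn_le; rewrite mem_filter uq.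
  apply/esym/negP => T2q.
  case: (foldr_minn_mem [seq q <- C | up r q] len) => [Tl|].
    by have := Clen q qC; rewrite ltnNge; move: T2q; rewrite /T2 Tl => ->.
  rewrite -/(T2 r) mem_filter => /andP[ud TC].
  move: T2q; rewrite leq_eqVlt => /orP[/eqP e|lt]; first by rewrite -e ud in uq.
  by move/negP: uq; apply; apply: ar_up (Mon _ _ _ rl TC qC lt) ud.
have T1l r : T1 r <= len by exact: foldr_minn_leb.
have T2l r : T2 r <= len by exact: foldr_minn_leb.
have Csz : size C <= len.
  rewrite -(size_iota 0 len); apply: uniq_leq_size => // q qC.
  by rewrite mem_iota add0n Clen.
pose ns := size C :: pairs id (M 0) C ++ pairs T1 T2 (iota 0 l).
have nsw x : x \in ns -> x < 2 ^ w.
  rewrite inE mem_cat => /or3P[/eqP->|/mem_pairs[y yC [->|->]]|/mem_pairs[y yC [->|->]]].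
  - exact: leq_ltn_trans Csz lenw.
  - exact: ltn_trans (Clen _ yC) lenw.
  - exact: M0w.
  - exact: leq_ltn_trans (T1l _) lenw.
  - exact: leq_ltn_trans (T2l _) lenw.
have szns : size ns = (size C + l).*2.+1.
  by rewrite /= size_cat !size_pairs size_iota doubleD.
exists (encn w ns); split; first by rewrite size_encn szns.
move=> i p il pC.
have numE j : j < size ns -> num (encn w ns) j = nth 0 ns j := num_enc nsw.
have num0 : num (encn w ns) 0 = size C by rewrite numE ?szns.
rewrite /dec num0.
have -> : find (fun j => num (encn w ns) j.*2.+1 == p) (iota 0 (size C)) = index p C.
  rewrite -find_nth_index //; apply: eq_in_find => j; rewrite mem_iota add0n => jC.
  rewrite numE; last by rewrite szns ltnS ltn_double (leq_trans jC) // leq_addr.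
  by rewrite /= (nth_pairs _ _ _ jC).1.
have iC : index p C < size C by rewrite index_mem.
rewrite numE; last by rewrite szns ltnS ltn_Sdouble (leq_trans iC) // leq_addr.
rewrite /= (nth_pairs _ _ _ iC).2 nth_index //.
have Tnth r : r < l ->
    nth 0 ns ((size C).*2 + r.*2).+1 = T1 r /\ nth 0 ns ((size C).*2 + r.*2).+2 = T2 r.
  move=> rl; rewrite /= -!addnS !nth_pairs_after.
  have rl' : r < size (iota 0 l) by rewrite size_iota.
  by have := nth_pairs T1 T2 [::] rl'; rewrite cats0 nth_iota // add0n => -[-> ->].
have numT r : r < l -> (num (encn w ns) ((size C).*2 + r.*2).+1 = T1 r) /\
                        (num (encn w ns) ((size C).*2 + r.*2).+2 = T2 r).
  move=> rl; have [h1 h2] := Tnth r rl.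
  split; rewrite numE ?h1 ?h2 // szns ltnS -doubleD.
    by rewrite ltn_double ltn_add2l.
  by rewrite ltn_Sdouble ltn_add2l.
have ril r : r \in iota 0 i -> r.+1 < l.
  by rewrite mem_iota add0n => ri; apply: leq_ltn_trans ri il.
have cu : count (fun r => num (encn w ns) ((size C).*2 + r.*2).+2 <= p) (iota 0 i)
          = count (fun r => up r p) (iota 0 i).
  apply: eq_in_count => r /ril rl; rewrite (numT r (ltnW rl)).2 upE //.
have cd : count (fun r => p < num (encn w ns) ((size C).*2 + r.*2).+1) (iota 0 i)
          = count (fun r => down r p) (iota 0 i).
  apply: eq_in_count => r /ril rl; rewrite (numT r (ltnW rl)).1 downE //.
rewrite cu cd.
have inv j : j < l -> M j p + count (fun r => down r p) (iota 0 j) =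
                      M 0 p + count (fun r => up r p) (iota 0 j).
  elim: j => [|j IH] jl; first by rewrite /= !addn0.
  rewrite -addn1 iotaD !count_cat /= !addn0 add0n addn1.
  have [h1 h2] := Lip j p jl pC.
  exact: ar_inv (IH (ltnW jl)) (ar_step h1 h2).
by rewrite -(inv i il) addnK.
Qed.

Lemma ar_size (T m l : nat) : 0 < T -> 0 < l ->
  (T.*2).+1 + T.*2 * (m + l).*2.+1 <= 9 * (l + m) * T ^ 1.
Proof. rewrite expn1 => *; nia. Qed.

Theorem lemma1 :
  exists (c k : nat) (dec : seq bool -> nat -> nat -> nat),
  forall (V D : finType) (tl : D -> V) (alpha sigma : {perm D}),
    plane_graph tl alpha sigma ->
  forall (d : D) (l : nat) (C2' : seq nat),
    l <= face_length alpha sigma d ->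
    uniq C2' ->
    (forall p, p \in C2' -> l <= p < face_length alpha sigma d) ->
  exists s : seq bool,
    size s <= c * (l + size C2') * (trunc_log 2 #|V|).+1 ^ k /\
    (forall i p, i < l -> p \in C2' ->
       dec s i p = dist tl alpha (face_vertex tl alpha sigma d i)
                                 (face_vertex tl alpha sigma d p)).
Proof.
exists 9, 1, dec => V D tl alpha sigma pg d l C2' ll uC Cl.
case: (posnP l) => [-> | lpos].
  by exists [::]; split => // i p; rewrite ltn0.
set len := face_length alpha sigma d.
set t := trunc_log 2 #|V|.
pose w := t.+1.*2.
pose M i q := dist tl alpha (face_vertex tl alpha sigma d i) (face_vertex tl alpha sigma d q).
have Vlt : #|V| < 2 ^ t.+1 by apply: trunc_log_ltn.
have w2 : 2 ^ w = 2 ^ t.+1 * 2 ^ t.+1 by rewrite /w -addnn expnD.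
have DV : #|D| <= #|V| * #|V|.
  rewrite -card_prod; apply: (@leq_card _ _ (fun z => (tl z, Defs.head tl alpha z))).
  move=> z z' [e1 e2]; case: pg => _ [_ smp] _ _; exact: smp.
have lenD : len <= #|D| by rewrite /len /face_length /fingraph.order max_card.
have lenw : len < 2 ^ w.
  by rewrite w2; apply: leq_ltn_trans (leq_trans lenD DV) (ltn_mul Vlt Vlt).
have [s [ss sok]] : exists s, size s = w.+1 + w * (size C2' + l).*2.+1 /\
    forall i p, i < l -> p \in C2' -> dec s i p = M i p.
  apply: (@encode_ok M l len w C2') => //.
  - by move=> p /Cl /andP[].
  - by move=> r q _ _; exact: adj_step pg d r _.
  - move=> r q q' rl qC q'C qq'.
    have /andP[lq _] := Cl q qC; have /andP[_ q'l] := Cl q' q'C.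
    apply: (monge pg) => //; exact: leq_trans rl lq.
  - move=> q _; apply: ltn_trans (dist_ltV pg _ _) _.
    apply: leq_trans Vlt _; apply: leq_pexp2l => //; rewrite /w -addnn leq_addr //.
exists s; split; last exact: sok.
by rewrite ss; apply: ar_size.
Qed.
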